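(* Let $p$ be an odd prime and let $m,r$ be positive integers with $p\nmid m$ and $r<m$. Then for every integer $s$ with $0\le s\le\langle -\frac{m-r}{m}\rangle_p$, $$\sum_{k=0}^{p-s-1}\frac{(q^r;q^m)_k\,(q^{m-r};q^m)_{k+s}}{(q^m;q^m)_k\,(q^m;q^m)_{k+s}}\equiv(-1)^{\langle -\frac{r}{m}\rangle_p}\,q^{-\frac{m\langle -\frac{r}{m}\rangle_p(\langle -\frac{r}{m}\rangle_p+1)}{2}}\pmod{[p]}.$$ In particular, if moreover $p\equiv\pm1\pmod m$, then $$\sum_{k=0}^{p-s-1}\frac{(q^r;q^m)_k\,(q^{m-r};q^m)_{k+s}}{(q^m;q^m)_k\,(q^m;q^m)_{k+s}}\equiv(-1)^{\langle -\frac{r}{m}\rangle_p}\,q^{\frac{r(m-r)(1-p^2)}{2m}}\pmod{[p]}.$$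
   Context: For an indeterminate $q$ and an integer $n\ge 0$: $(a;q)_0=1$ and $(a;q)_n=(1-a)(1-aq)\cdots(1-aq^{n-1})$. For a positive integer $p$, $[p]=\frac{1-q^p}{1-q}=1+q+\cdots+q^{p-1}$. For a prime $p$, $[p]$ is irreducible in $\mathbb{Q}[q]$; for rational functions $A,B$ of $q$ whose denominators are coprime to $[p]$, $A\equiv B\pmod{[p]^r}$ means that $A-B$, written in lowest terms, has numerator divisible by $[p]^r$ in $\mathbb{Q}[q]$. For a prime $p$ and a $p$-adic integer $x$ (e.g. a rational number whose denominator is not divisible by $p$), $\langle x\rangle_p$ denotes the least nonnegative residue of $x$ modulo $p$, i.e. the unique integer in $\{0,1,\dots,p-1\}$ congruent to $x$ modulo $p$. *)

(* Defs.v *)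
From HB Require Import structures.
From mathcomp Require Import all_boot all_order all_algebra.
Set Implicit Arguments. Unset Strict Implicit. Unset Printing Implicit Defensive.
Import Order.TTheory GRing.Theory Num.Theory.
Local Open Scope ring_scope.

(* Polynomials in the indeterminate q over Q, and rational functions of q. *)
Notation qpoly := {poly rat}.
Notation qfrac := {fraction {poly rat}}.
Definition pfrac (P : qpoly) : qfrac := FracField.tofrac P.

Definition qpoch (a b : qpoly) (n : nat) : qpoly :=
  \prod_(i < n) (1 - a * b ^+ i).

Definition qint (p : nat) : qpoly := \sum_(i < p) 'X^i.

Definition qpow (e : int) : qfrac :=
  match e with
  | Posz n => pfrac 'X^n
  | Negz n => (pfrac 'X^(n.+1))^-1
  end.

(* A = B (mod [p]^r) for rational functions whose denominators are coprime
   to [p]: A - B = [p]^r * N / D with D a (nonzero) polynomial coprime to [p]. *)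
Definition qcong (p r : nat) (A B : qfrac) : Prop :=
  exists N D : qpoly, D != 0 /\ coprimep D (qint p) /\
    A - B = pfrac (qint p ^+ r * N) / pfrac D.

(* <x>_p : least nonnegative residue of the rational x modulo p, i.e. the
   least t in {0,...,p-1} with p | numq x - t * denq x  (returns p if none). *)
Definition lnr (p : nat) (x : rat) : nat :=
  find (fun t : nat => ((p%:Z) %| (numq x - t%:Z * denq x))%Z) (iota 0 p).

Definition summand (m r s k : nat) : qfrac :=
  pfrac (qpoch 'X^r 'X^m k * qpoch 'X^(m - r) 'X^m (k + s))
  / pfrac (qpoch 'X^m 'X^m k * qpoch 'X^m 'X^m (k + s)).

(* Main.v *)
Require Import Defs.
From HB Require Import structures.
From mathcomp Require Import all_boot all_order all_algebra all_field.
From mathcomp Require Import ring zify.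
Import Order.TTheory GRing.Theory Num.Theory.
Local Open Scope ring_scope.

Definition ev (z : algC) (P : {poly rat}) : algC := (map_poly ratr P).[z].

Lemma evM z P Q : ev z (P * Q) = ev z P * ev z Q.
Proof. by rewrite /ev rmorphM hornerM. Qed.
Lemma evD z P Q : ev z (P + Q) = ev z P + ev z Q.
Proof. by rewrite /ev rmorphD hornerD. Qed.
Lemma evB z P Q : ev z (P - Q) = ev z P - ev z Q.
Proof. by rewrite /ev rmorphB hornerD hornerN. Qed.
Lemma ev1 z : ev z 1 = 1.
Proof. by rewrite /ev rmorph1 hornerC. Qed.
Lemma evN1 z : ev z (-1) = -1.
Proof. by rewrite /ev rmorphN rmorph1 hornerN hornerC. Qed.
Lemma evXn z n : ev z 'X^n = z ^+ n.
Proof. by rewrite /ev map_polyXn hornerXn. Qed.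
Lemma evX z : ev z 'X = z.
Proof. by rewrite /ev map_polyX hornerX. Qed.
Lemma evXn_exp z n k : ev z ('X^n ^+ k) = z ^+ (n * k).
Proof. by rewrite -exprM evXn. Qed.
Lemma ev_prod z n (F : nat -> {poly rat}) :
  ev z (\prod_(i < n) F i) = \prod_(i < n) ev z (F i).
Proof.
elim: n => [|n IH]; first by rewrite !big_ord0 ev1.
by rewrite !big_ord_recr /= evM IH.
Qed.
Lemma ev_sum z n (F : nat -> {poly rat}) :
  ev z (\sum_(i < n) F i) = \sum_(i < n) ev z (F i).
Proof.
elim: n => [|n IH]; first by rewrite !big_ord0 /ev rmorph0 horner0.
by rewrite !big_ord_recr /= evD IH.
Qed.

Lemma ev_qint p z : (1 < p)%N -> p.-primitive_root z -> ev z (qint p) = 0.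
Proof.
move=> p1 hz; rewrite /qint ev_sum.
under eq_bigr do rewrite evXn.
have z1 : z != 1.
  apply/negP=> /eqP z1; move: (prim_order_dvd hz 1); rewrite z1 expr1n eqxx.
  by move/dvdn_leq => /(_ isT); rewrite leqNgt p1.
have := subrX1 z p; rewrite (prim_expr_order hz) subrr => /esym/eqP.
by rewrite mulf_eq0 subr_eq0 (negbTE z1) => /eqP.
Qed.

Lemma size_qint p : (0 < p)%N -> size (qint p) = p.
Proof.
move=> p0; have := subrX1 ('X : {poly rat}) p.
rewrite /qint.
have -> : \sum_(i < p) ('X : {poly rat}) ^+ i = \sum_(i < p) 'X^i by [].
have -> : ('X - 1 : {poly rat}) = 'X - 1%:P by rewrite polyC1.
set S := \sum_(i < p) _ => H.
have := congr1 (fun q : {poly rat} => size q) H; rewrite /= size_XnsubC //.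
case: (eqVneq S 0) => [->|hq]; first by rewrite mulr0 size_poly0.
rewrite size_mul ?polyXsubC_eq0 // size_XsubC /=.
move=> E; apply/eqP; rewrite -eqSS E; done.
Qed.

Lemma qint_dvd p z P : prime p -> p.-primitive_root z -> ev z P = 0 -> qint p %| P.
Proof.
move=> pp hz hP.
have [p0 [Dmin mon] Hdv] := minCpolyP z.
have h1 : p0 %| P by rewrite -Hdv; apply/eqP.
have h2 : p0 %| qint p by rewrite -Hdv; apply/eqP; apply: ev_qint => //; exact: prime_gt1.
have hs : size p0 = size (qint p).
  rewrite size_qint ?prime_gt0 //.
  have := size_cyclotomic z p; rewrite -(minCpoly_cyclotomic hz) Dmin size_map_poly.
  by rewrite totient_prime // prednK // prime_gt0.
have he : p0 %= qint p by rewrite -dvdp_size_eqp // hs.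
by rewrite -(eqp_dvdl _ he).
Qed.

Arguments qint_dvd {p z P}.
Arguments ev_qint {p z}.

Lemma qint_coprime p z D : prime p -> p.-primitive_root z -> ev z D != 0 ->
  coprimep D (qint p).
Proof.
move=> pp hz hD.
have Phi0 : qint p != 0 by rewrite -size_poly_eq0 size_qint ?prime_gt0 // -lt0n prime_gt0.
set g := gcdp D (qint p).
have hg : ev z g != 0.
  apply/negP => /eqP /(qint_dvd pp hz) h.
  have hd : qint p %| D := dvdp_trans h (dvdp_gcdl _ _).
  move: hD; rewrite -(divpK hd) evM ev_qint ?prime_gt1 // mulr0 eqxx //.
have hgd : g %| qint p := dvdp_gcdr _ _.
set h := qint p %/ g.
have Eh : qint p = h * g by rewrite divpK.
have g0 : g != 0 by apply/negP=> /eqP g0; move: hgd; rewrite g0 dvd0p (negbTE Phi0).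
have h0 : h != 0 by apply/negP=> /eqP h0; move: Eh; rewrite h0 mul0r => /eqP; rewrite (negbTE Phi0).
have eh : ev z h = 0.
  have := ev_qint (prime_gt1 pp) hz; rewrite Eh evM => /eqP.
  by rewrite mulf_eq0 (negbTE hg) orbF => /eqP.
have := dvdp_leq h0 (qint_dvd pp hz eh).
rewrite {1}Eh size_mul // => H.
rewrite /coprimep -/g.
have : (0 < size g)%N by rewrite lt0n size_poly_eq0.
move=> ?; apply/eqP; lia.
Qed.

Lemma frac_sub (K : fieldType) (a b c d : K) : b != 0 -> d != 0 ->
  a / b - c / d = (a * d - c * b) / (b * d).
Proof. by move=> hb hd; field; rewrite hb hd. Qed.
Lemma frac_add (K : fieldType) (a b c d : K) : b != 0 -> d != 0 ->
  a / b + c / d = (a * d + c * b) / (b * d).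
Proof. by move=> hb hd; field; rewrite hb hd. Qed.
Lemma frac_mul (K : fieldType) (a b c d : K) : b != 0 -> d != 0 ->
  (a / b) * (c / d) = (a * c) / (b * d).
Proof. by move=> hb hd; field; rewrite hb hd. Qed.
Lemma cross_eq (K : fieldType) (a b c d : K) : b != 0 -> d != 0 ->
  a / b = c / d -> a * d - c * b = 0.
Proof. move=> hb hd E; rewrite -[a](divfK hb) -[c](divfK hd) E; ring. Qed.

Definition good (z : algC) (f : {fraction {poly rat}}) (v : algC) :=
  exists P Q : {poly rat}, ev z Q != 0 /\ f = pfrac P / pfrac Q /\ v = ev z P / ev z Q.

Lemma ev_neq0 z Q : ev z Q != 0 -> Q != 0.
Proof. by apply: contraNneq => ->; rewrite /ev rmorph0 horner0. Qed.

Lemma pfracM (P Q : {poly rat}) : pfrac (P * Q) = pfrac P * pfrac Q.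
Proof. by rewrite /pfrac rmorphM. Qed.
Lemma pfracB (P Q : {poly rat}) : pfrac (P - Q) = pfrac P - pfrac Q.
Proof. by rewrite /pfrac rmorphB. Qed.
Lemma pfracD (P Q : {poly rat}) : pfrac (P + Q) = pfrac P + pfrac Q.
Proof. by rewrite /pfrac rmorphD. Qed.
Lemma pfrac1 : pfrac 1 = 1.
Proof. by rewrite /pfrac rmorph1. Qed.
Lemma pfrac_neq0 (Q : {poly rat}) : Q != 0 -> pfrac Q != 0.
Proof. by rewrite /pfrac tofrac_eq0. Qed.

Lemma good_qcong p z f g v : prime p -> p.-primitive_root z ->
  good z f v -> good z g v -> qcong p 1 f g.
Proof.
move=> pp hz [P1 [Q1 [h1 [-> ->]]]] [P2 [Q2 [h2 [-> E]]]].
set N0 := P1 * Q2 - P2 * Q1.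
have eN : ev z N0 = 0.
  by rewrite /N0 evB !evM; apply: cross_eq.
have := qint_dvd pp hz eN => /dvdpP [N' EN].
exists N', (Q1 * Q2); split; first by apply: (@ev_neq0 z); rewrite evM mulf_neq0.
split; first by apply: (@qint_coprime p z _ pp hz); rewrite evM mulf_neq0.
rewrite expr1 [qint p * N']mulrC -EN /N0 pfracB !pfracM.
have q1 := @pfrac_neq0 Q1 (@ev_neq0 z _ h1); have q2 := @pfrac_neq0 Q2 (@ev_neq0 z _ h2).
by rewrite (@frac_sub _ (pfrac P1) (pfrac Q1) (pfrac P2) (pfrac Q2) q1 q2).
Qed.

Lemma good_poly z P : good z (pfrac P) (ev z P).
Proof.
exists P, 1; rewrite ev1 pfrac1 oner_neq0 divr1 divr1; done.
Qed.

Lemma good_add z f g u v : good z f u -> good z g v -> good z (f + g) (u + v).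
Proof.
move=> [P1 [Q1 [h1 [-> ->]]]] [P2 [Q2 [h2 [-> ->]]]].
exists (P1 * Q2 + P2 * Q1), (Q1 * Q2); rewrite evM mulf_neq0 //; split => //.
have q1 := @pfrac_neq0 Q1 (@ev_neq0 z _ h1); have q2 := @pfrac_neq0 Q2 (@ev_neq0 z _ h2).
by rewrite pfracD !pfracM evD !evM (@frac_add _ (pfrac P1) (pfrac Q1) (pfrac P2) (pfrac Q2) q1 q2)
  (@frac_add _ (ev z P1) (ev z Q1) (ev z P2) (ev z Q2) h1 h2).
Qed.

Lemma good_mul z f g u v : good z f u -> good z g v -> good z (f * g) (u * v).
Proof.
move=> [P1 [Q1 [h1 [-> ->]]]] [P2 [Q2 [h2 [-> ->]]]].
exists (P1 * P2), (Q1 * Q2); rewrite evM mulf_neq0 //; split => //.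
have q1 := @pfrac_neq0 Q1 (@ev_neq0 z _ h1); have q2 := @pfrac_neq0 Q2 (@ev_neq0 z _ h2).
by rewrite !pfracM !evM (@frac_mul _ (pfrac P1) (pfrac Q1) (pfrac P2) (pfrac Q2) q1 q2)
  (@frac_mul _ (ev z P1) (ev z Q1) (ev z P2) (ev z Q2) h1 h2).
Qed.

Lemma good_sum z n (F : nat -> {fraction {poly rat}}) (V : nat -> algC) :
  (forall i, (i < n)%N -> good z (F i) (V i)) ->
  good z (\sum_(i < n) F i) (\sum_(i < n) V i).
Proof.
elim: n => [|n IH] H.
  by rewrite !big_ord0; have := good_poly z 0; rewrite /ev rmorph0 horner0 /pfrac rmorph0.
rewrite !big_ord_recr /=; apply: good_add; last exact: H.
by apply: IH => i hi; apply: H; rewrite ltnS ltnW.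
Qed.

Lemma good_qpow_neg z N : z != 0 -> good z (qpow (- (N%:Z))) (z ^+ N)^-1.
Proof.
move=> z0; case: N => [|N].
  by rewrite /= expr0 invr1; have := good_poly z 'X^0; rewrite evXn expr0.
rewrite /qpow /=.
exists (1 : {poly rat}), ('X^(N.+1) : {poly rat}); rewrite evXn expf_neq0 //; split => //.
by rewrite pfrac1 ev1 !div1r.
Qed.
Definition P (c x : algC) (n : nat) : algC := \prod_(i < n) (1 - c * x ^+ i).

Lemma PS c x n : P c x n.+1 = P c x n * (1 - c * x ^+ n).
Proof. by rewrite /P big_ord_recr. Qed.
Lemma P0 c x : P c x 0 = 1.
Proof. by rewrite /P big_ord0. Qed.

Lemma P_zero c x n j : (j < n)%N -> c * x ^+ j = 1 -> P c x n = 0.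
Proof.
move=> hj hc; apply/eqP/prodf_eq0; exists (Ordinal hj) => //=.
by rewrite hc subrr.
Qed.

Lemma xpow_neq1 p (x : algC) i : p.-primitive_root x -> (0 < i < p)%N -> x ^+ i != 1.
Proof.
move=> hx /andP [h0 h1]; rewrite -(prim_order_dvd hx).
by apply/negP => /(dvdn_leq h0); rewrite leqNgt h1.
Qed.

Lemma Pxx_neq0 p x n : p.-primitive_root x -> (n < p)%N -> P x x n != 0.
Proof.
move=> hx hn; apply/prodf_neq0 => i _.
rewrite -exprS subr_eq0 eq_sym.
apply: (@xpow_neq1 p x i.+1 hx).
by rewrite ltn0Sn /=; apply: leq_ltn_trans hn.
Qed.

Lemma prod_pow (x : algC) (f : nat -> nat) n :
  \prod_(i < n) x ^+ f i = x ^+ (\sum_(i < n) f i).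
Proof.
elim: n => [|n IH]; first by rewrite !big_ord0.
by rewrite !big_ord_recr /= IH exprD.
Qed.

Definition T (c d x : algC) (s k : nat) : algC :=
  P c x k * P d x (k + s) / (P x x k * P x x (k + s)).

Definition G (c d x : algC) (a s k : nat) : algC :=
  x * x ^+ s * x ^+ a / (x * x ^+ s * x ^+ a - 1) * (1 - x ^+ k) * T c d x s k.

Lemma step_k p (c d x : algC) a s k : p.-primitive_root x ->
  c * x ^+ a = 1 -> d = x ^+ a.+1 -> (s + a + 1 < p)%N -> (k + s + 1 < p)%N ->
  T c d x s.+1 k - T c d x s k = G c d x a s k.+1 - G c d x a s k.
Proof.
move=> hx hc hd hsa hks.
have x0 : x != 0 by rewrite (prim_root_eq0 hx) -lt0n (prim_order_gt0 hx).
rewrite /G /T addnS addSn !PS exprS exprD.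
have hA : P x x k != 0 by apply: (@Pxx_neq0 p x k hx); lia.
have hB : P x x (k + s) != 0 by apply: (@Pxx_neq0 p x (k + s) hx); lia.
have h1 : 1 - x * x ^+ k != 0.
  by rewrite -exprS subr_eq0 eq_sym (@xpow_neq1 p x k.+1 hx) //; lia.
have h2 : 1 - x * (x ^+ k * x ^+ s) != 0.
  by rewrite -exprD -exprS subr_eq0 eq_sym (@xpow_neq1 p x (k + s).+1 hx) //; lia.
have h3 : x * x ^+ s * x ^+ a - 1 != 0.
  by rewrite -exprS -exprD subr_eq0 (@xpow_neq1 p x (s.+1 + a) hx) //; lia.
have w0 : x ^+ a != 0 by rewrite expf_neq0.
have -> : c = (x ^+ a)^-1 by rewrite -[c]mulr1 -(divff w0) mulrA hc mul1r.
rewrite hd exprS.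
move: hA hB h1 h2 h3 w0.
set A := P x x k; set B := P x x (k + s); set u := x ^+ k; set v := x ^+ s; set w := x ^+ a.
set A' := P _ x k; set B' := P _ x (k + s).
move=> hA hB h1 h2 h3 w0.
field.
by rewrite hA hB h1 h2 h3 w0.
Qed.

Definition F (c d x : algC) (p s : nat) : algC := \sum_(k < p - s) T c d x s k.

Lemma step p (c d x : algC) a s : p.-primitive_root x ->
  c * x ^+ a = 1 -> d = x ^+ a.+1 -> (s + a + 1 < p)%N ->
  F c d x p s.+1 = F c d x p s.
Proof.
move=> hx hc hd hsa.
set K := (p - s.+1)%N.
have EK : (p - s = K.+1)%N by rewrite /K; lia.
have TK : T c d x s K = 0.
  by rewrite /T (@P_zero c x K a) ?mul0r ?div0r //; rewrite /K; lia.
rewrite /F EK big_ord_recr /= TK addr0 -/K.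
apply/eqP; rewrite -subr_eq0 -sumrB; apply/eqP.
rewrite -(big_mkord xpredT (fun k => T c d x s.+1 k - T c d x s k)).
rewrite (telescope_sumr_eq (G c d x a s)) //.
  by rewrite /G TK expr0 subrr !mulr0 mul0r subrr.
move=> k /andP [_ hk]; apply: (@step_k p c d x a s k hx hc hd hsa); rewrite /K in hk; lia.
Qed.

Lemma sum_tri a b : (\sum_(i < b) (a + b - i) + 'C(a.+1, 2) = 'C(a + b + 1, 2))%N.
Proof.
elim: b => [|b IH]; first by rewrite big_ord0 add0n addn0 addn1.
rewrite big_ord_recl /=.
have -> : (\sum_(i < b) (a + b.+1 - bump 0 i) = \sum_(i < b) (a + b - i))%N.
  by apply: eq_bigr => i _; rewrite /bump /=; lia.
rewrite -addnA IH.
have -> : (a + b.+1 + 1 = (a + b + 1).+1)%N by lia.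
rewrite binS bin1; lia.
Qed.

Lemma refl_prod p (d x : algC) a b : p.-primitive_root x -> (a + b + 1 = p)%N ->
  d = x ^+ a.+1 ->
  P d x b = \prod_(i < b) (- x ^+ (p - i.+1)) * P x x b.
Proof.
move=> hx hp hd.
rewrite /P -big_split /= (reindex_inj rev_ord_inj) /=.
apply: eq_bigr => i _.
rewrite hd -exprD mulrBr mulr1 mulNr opprK -!exprS -exprD.
have -> : (p - i.+1 + i.+1 = p)%N by have := ltn_ord i; lia.
rewrite (prim_expr_order hx).
have -> : (a.+1 + (b - i.+1) = p - i.+1)%N by have := ltn_ord i; lia.
by rewrite addrC.
Qed.

Lemma F_end p (c d x : algC) a : prime p -> odd p -> p.-primitive_root x ->
  (a < p)%N -> d = x ^+ a.+1 ->
  F c d x p (p - a.+1) = (-1) ^+ a * (x ^+ 'C(a.+1, 2))^-1.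
Proof.
move=> pp po hx hap hd.
set b := (p - a.+1)%N.
have hab : (a + b + 1 = p)%N by rewrite /b; lia.
rewrite /F.
have -> : (p - b = a.+1)%N by rewrite /b; lia.
rewrite big_ord_recl /= big1 ?addr0; last first.
  move=> i _; rewrite /T (@P_zero d x _ b) ?mulr0 ?mul0r //.
    by rewrite /bump /=; lia.
  by rewrite hd -exprD addSn -addn1 hab (prim_expr_order hx).
rewrite /T !P0 !mul1r add0n (@refl_prod p d x a b hx hab hd) mulfK; last first.
  by apply: (@Pxx_neq0 p x b hx); lia.
have -> : \prod_(i < b) - x ^+ (p - i.+1) = \prod_(i in 'I_b) - x ^+ (p - i.+1) by [].
rewrite prodrN card_ord.
have -> : \prod_(i in 'I_b) x ^+ (p - i.+1) = \prod_(i < b) x ^+ (a + b - i) .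
  by apply: eq_bigr => i _; congr (_ ^+ _); lia.
rewrite prod_pow.
have hC : x ^+ 'C(p, 2) = 1.
  apply/eqP; rewrite -(prim_order_dvd hx); apply: prime_dvd_bin => //.
  have := prime_gt1 pp; case: p po {hab hap pp hx b} => [|[|[|p]]] //.
have x0 : x ^+ 'C(a.+1, 2) != 0.
  by rewrite expf_neq0 // (prim_root_eq0 hx) -lt0n (prim_order_gt0 hx).
have -> : x ^+ (\sum_(i < b) (a + b - i)) = (x ^+ 'C(a.+1, 2))^-1.
  by rewrite -[LHS]mulr1 -(divff x0) mulrA -exprD sum_tri hab hC mul1r.
congr (_ * _); rewrite -signr_odd -[in RHS]signr_odd; congr (_ ^+ _).
move: (congr1 odd hab); rewrite po !oddD /=.
by case: (odd a); case: (odd b).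
Qed.

Lemma core p (c d x : algC) a s : prime p -> odd p -> p.-primitive_root x ->
  (a < p)%N -> c * x ^+ a = 1 -> d = x ^+ a.+1 -> (s <= p - a.+1)%N ->
  F c d x p s = (-1) ^+ a * (x ^+ 'C(a.+1, 2))^-1.
Proof.
move=> pp po hx hap hc hd hs.
rewrite -(@F_end p c d x a pp po hx hap hd).
set b := (p - a.+1)%N.
suff H : forall t, (t <= b)%N -> F c d x p (b - t) = F c d x p b.
  by have := H (b - s)%N (leq_subr _ _); rewrite subKn.
elim => [|t IH] ht; first by rewrite subn0.
rewrite -IH; last by lia.
have -> : (b - t = (b - t.+1).+1)%N by lia.
rewrite (@step p c d x a (b - t.+1) hx hc hd) //; rewrite /b; lia.
Qed.
Lemma lnr_pred_iff (p r m t : nat) : prime p -> (0 < m)%N -> ~~ (p %| m)%N ->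
  ((p%:Z) %| (numq (- (r%:Q / m%:Q)) - t%:Z * denq (- (r%:Q / m%:Q))))%Z =
  (p %| r + t * m)%N.
Proof.
move=> pp m0 pm.
set x := - (r%:Q / m%:Q).
set n := numq x; set e := denq x.
have hn : n <= 0 by rewrite /n numq_le0 /x oppr_le0 divr_ge0.
have he : 0 < e := denq_gt0 x.
have eq1 : n * m%:Z = - (r%:Z * e).
  apply: (@intr_inj rat); rewrite !rmorphM rmorphN rmorphM /=.
  have m0' : (m%:Z)%:~R != 0 :> rat by rewrite intr_eq0 -lt0n.
  have E := numqE x; rewrite -/n -/e in E.
  rewrite E /x; field => //.
rewrite dvdzE /=.
have hA : (absz (n - t%:Z * e)%R = absz n + t * absz e)%N by lia.
have hB : (absz n * m = r * absz e)%N by lia.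
rewrite hA.
have pE : ~~ (p %| absz e)%N.
  apply/negP => hpe.
  have : (p %| absz n * m)%N by rewrite hB dvdn_mull.
  rewrite Euclid_dvdM // (negbTE pm) orbF => hpn.
  have := coprime_num_den x; rewrite -/n -/e /coprime => /eqP hg.
  have : (p %| gcdn (absz n) (absz e))%N by rewrite dvdn_gcd hpn hpe.
  by rewrite hg dvdn1 => /eqP p1; move: pp; rewrite p1.
apply/idP/idP => H.
  have : (p %| absz e * (r + t * m))%N.
    have -> : (absz e * (r + t * m) = m * (absz n + t * absz e))%N by nia.
    by rewrite dvdn_mull.
  by rewrite Euclid_dvdM // (negbTE pE).
have : (p %| m * (absz n + t * absz e))%N.
  have <- : (absz e * (r + t * m) = m * (absz n + t * absz e))%N by nia.
  by rewrite dvdn_mull.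
by rewrite Euclid_dvdM // (negbTE pm).
Qed.

Lemma lnr_spec (p r m : nat) : prime p -> (0 < m)%N -> ~~ (p %| m)%N ->
  (lnr p (- (r%:Q / m%:Q)) < p)%N /\ (p %| r + lnr p (- (r%:Q / m%:Q)) * m)%N.
Proof.
move=> pp m0 pm.
have [u _ hu] := Bezoutl m (prime_gt0 pp).
have cop : coprime p m by rewrite prime_coprime.
rewrite (eqP cop) in hu.
set t0 := ((r * u) %% p)%N.
have ht0 : (p %| r + t0 * m)%N.
  rewrite /dvdn /t0 -modnDmr modnMml modnDmr.
  have -> : (r + r * u * m = r * (1 + u * m))%N by ring.
  by rewrite -/(dvdn p _) dvdn_mull.
set pr := fun t : nat => ((p%:Z) %| (numq (- (r%:Q / m%:Q)) - t%:Z * denq (- (r%:Q / m%:Q))))%Z.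
have hpr t : pr t = (p %| r + t * m)%N by rewrite /pr lnr_pred_iff.
have hhas : has pr (iota 0 p).
  apply/hasP; exists t0; last by rewrite hpr.
  by rewrite mem_iota add0n ltn_mod prime_gt0.
have := hhas; rewrite has_find size_iota => hlt.
split => //.
have := nth_find 0 hhas; rewrite nth_iota // add0n hpr.
done.
Qed.

Lemma prim_cancel p (z : algC) k i j : p.-primitive_root z -> coprime p k ->
  z ^+ (k * i) = z ^+ (k * j) -> z ^+ i = z ^+ j.
Proof.
move=> hz cop /eqP; rewrite !(eq_prim_root_expr hz) => H; apply/eqP.
rewrite (eq_prim_root_expr hz).
case: (leqP j i) => hij.
  rewrite eqn_mod_dvd // -(Gauss_dvdr _ cop) mulnBr -eqn_mod_dvd //.
  by rewrite leq_mul2l hij orbT.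
have hji : (i <= j)%N by apply: ltnW.
rewrite eq_sym eqn_mod_dvd // -(Gauss_dvdr _ cop) mulnBr -eqn_mod_dvd; first by rewrite eq_sym.
by rewrite leq_mul2l hji orbT.
Qed.

Lemma bin2_twice a : ('C(a.+1, 2) * 2 = a.+1 * a)%N.
Proof.
elim: a => [|a IH] //.
rewrite binS bin1 mulnDl IH; lia.
Qed.

Lemma ev_qpoch z A B n : ev z (qpoch A B n) = P (ev z A) (ev z B) n.
Proof.
rewrite /qpoch /P.
have -> : ev z (\prod_(i < n) (1 - A * B ^+ i)) = \prod_(i < n) ev z (1 - A * B ^+ i).
  rewrite /ev rmorph_prod /=.
  by apply: (big_morph (fun q => q.[z])) => [x y|]; rewrite ?hornerM ?hornerC.
apply: eq_bigr => i _.
by rewrite evB ev1 evM /ev rmorphXn horner_exp.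
Qed.

Lemma good_sign z n : good z ((-1) ^+ n) ((-1) ^+ n).
Proof.
have := good_poly z ((-1) ^+ n).
by rewrite /pfrac rmorphXn rmorphN rmorph1 /ev rmorphXn rmorphN rmorph1 horner_exp hornerN hornerC.
Qed.

Theorem theorem2p7 (p m r : nat) :
  prime p -> odd p -> (0 < m)%N -> (0 < r)%N -> ~~ (p %| m)%N -> (r < m)%N ->
  forall s : nat,
    (s <= lnr p (- ((m - r)%N%:Q / m%:Q)))%N ->
    qcong p 1 (\sum_(k < p - s) summand m r s k)
      ((-1) ^+ lnr p (- (r%:Q / m%:Q)) *
       qpow (- (((m * (lnr p (- (r%:Q / m%:Q)) * (lnr p (- (r%:Q / m%:Q))).+1)) %/ 2)%N)%:Z))
    /\
    ((p = 1 %[mod m] \/ p.+1 = 0 %[mod m])%N ->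
     qcong p 1 (\sum_(k < p - s) summand m r s k)
      ((-1) ^+ lnr p (- (r%:Q / m%:Q)) *
       qpow (- (((r * (m - r) * (p ^ 2 - 1)) %/ (2 * m))%N)%:Z))).
Proof.
move=> pp po m0 r0 pm rm s hs.
have [ha hra] := @lnr_spec p r m pp m0 pm.
have [hb hrb] := @lnr_spec p (m - r) m pp m0 pm.
set a := lnr p (- (r%:Q / m%:Q)) in ha hra *.
set b := lnr p (- ((m - r)%N%:Q / m%:Q)) in hs hb hrb.
have hab : (a + b + 1 = p)%N.
  have : (p %| (r + a * m) + ((m - r) + b * m))%N by rewrite dvdn_add.
  have -> : (r + a * m + (m - r + b * m) = m * (a + b + 1))%N by nia.
  rewrite Euclid_dvdM // (negbTE pm) /= => /dvdnP [k hk].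
  have hk2 : (k * p < 2 * p)%N by rewrite -hk; lia.
  rewrite ltn_pmul2r ?prime_gt0 // in hk2.
  by move: hk hk2; case: k => [|[|k]] //; rewrite ?mul0n ?mul1n //; lia.
have hs' : (s <= p - a.+1)%N by lia.
have [z hz] := C_prim_root_exists (prime_gt0 pp).
have z0 : z != 0 by rewrite (prim_root_eq0 hz) -lt0n prime_gt0.
set x := z ^+ m.
have hx : p.-primitive_root x.
  by rewrite /x prim_root_exp_coprime // coprime_sym prime_coprime.
have hc : z ^+ r * x ^+ a = 1.
  by rewrite /x -exprM -exprD; apply/eqP; rewrite -(prim_order_dvd hz) mulnC.
have hd : z ^+ (m - r) = x ^+ a.+1.
  rewrite /x -exprM.
  have -> : (m * a.+1 = (m - r) + (r + a * m))%N.
    by rewrite mulnS addnA (subnK (ltnW rm)) mulnC.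
  rewrite exprD; move: hra; rewrite (prim_order_dvd hz) => /eqP ->.
  by rewrite mulr1.
have Hcore := @core p (z ^+ r) (z ^+ (m - r)) x a s pp po hx ha hc hd hs'.
have hsum : good z (\sum_(k < p - s) summand m r s k) (F (z ^+ r) (z ^+ (m - r)) x p s).
  rewrite /F; apply: good_sum => k hk; rewrite /summand.
  exists (qpoch 'X^r 'X^m k * qpoch 'X^(m - r) 'X^m (k + s)),
    (qpoch 'X^m 'X^m k * qpoch 'X^m 'X^m (k + s)).
  split; last split => //.
    rewrite !evM !ev_qpoch !evXn -/x mulf_neq0 //.
      by apply: (@Pxx_neq0 p x k hx); lia.
    by apply: (@Pxx_neq0 p x (k + s) hx); lia.
  by rewrite /T !evM !ev_qpoch !evXn.
have hN1 : ((m * (a * a.+1)) %/ 2 = m * 'C(a.+1, 2))%N.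
  by rewrite (mulnC a) -bin2_twice mulnA mulnK.
split.
  apply: (@good_qcong p z _ _ _ pp hz hsum); rewrite Hcore.
  apply: good_mul; first exact: good_sign.
  by rewrite hN1 /x -exprM; apply: good_qpow_neg.
move=> hmod.
apply: (@good_qcong p z _ _ _ pp hz hsum); rewrite Hcore.
apply: good_mul; first exact: good_sign.
set N2 := ((r * (m - r) * (p ^ 2 - 1)) %/ (2 * m))%N.
have p1 : (1 < p)%N := prime_gt1 pp.
have hdiv : (2 * m %| r * (m - r) * (p ^ 2 - 1))%N.
  have -> : (p ^ 2 - 1 = (p - 1) * (p + 1))%N by rewrite -subn_sqr exp1n.
  apply: dvdn_mull.
  have e1 : (2 %| p - 1)%N by rewrite dvdn2 oddB ?po //; lia.
  have e2 : (2 %| p + 1)%N by rewrite dvdn2 oddD po.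
  case: hmod => hm.
    have : (m %| p - 1)%N by rewrite -eqn_mod_dvd ?hm //; lia.
    by move=> h; rewrite mulnC; apply: dvdn_mul.
  have : (m %| p + 1)%N by rewrite addn1 /dvdn hm mod0n.
  by move=> h; apply: dvdn_mul.
have hN2 : (2 * m * N2 = r * (m - r) * (p ^ 2 - 1))%N by rewrite mulnC divnK.
have cop : coprime p (2 * m).
  rewrite coprimeMr !prime_coprime // pm andbT.
  apply/negP => /(@dvdn_leq p 2 isT) => hp2.
  have hp : p = 2%N by lia.
  by move: po; rewrite hp.
have zrm : z ^+ (r * (m - r)) != 0 by rewrite expf_neq0.
have key : z ^+ N2 = x ^+ 'C(a.+1, 2).
  rewrite /x -exprM; apply: (@prim_cancel p z _ _ _ hz cop).
  apply: (mulIf zrm).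
  have -> : z ^+ (2 * m * N2) * z ^+ (r * (m - r)) = 1.
    rewrite hN2 -exprD; apply/eqP; rewrite -(prim_order_dvd hz).
    have -> : (r * (m - r) * (p ^ 2 - 1) + r * (m - r) = r * (m - r) * p ^ 2)%N.
      have hp2 : (1 <= p ^ 2)%N by rewrite expn_gt0 prime_gt0.
      by rewrite -{2}(muln1 (r * (m - r))%N) -mulnDr subnK.
    by rewrite dvdn_mull // dvdn_exp.
  have -> : (2 * m * (m * 'C(a.+1, 2)) = (m * a) * (m * a.+1))%N.
    have -> : (2 * m * (m * 'C(a.+1, 2)) = m * m * ('C(a.+1, 2) * 2))%N by ring.
    by rewrite bin2_twice; ring.
  rewrite exprM.
  have -> : z ^+ (m * a) = (z ^+ r)^-1.
    by rewrite exprM -/x -[RHS]mul1r -hc mulrC mulKf // expf_neq0.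
  rewrite exprVn -exprM (mulnC r (m * a.+1)%N) exprM (exprM z m a.+1) -/x -hd -exprM.
  by rewrite (mulnC (m - r)%N r) mulVf.
by rewrite -key; apply: good_qpow_neg.
Qed.
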